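(* Let $\kappa_n>0$, $\gamma>0$ and $\chi_n,\Omega,\tilde\omega_n\in\mathbb{R}$, and put $Q_n=-(\gamma+i\Omega-i\tilde\omega_n)$ and $S_n=\gamma\chi_n/2$. Let $F_n:[0,\infty)\to\mathbb{C}$ be the solution of $$\frac{\mathrm{d}}{\mathrm{d}t}F_n(t)=\kappa_nF_n(t)^2+Q_nF_n(t)+S_n,\qquad F_n(0)=0 .$$ If $\tilde\omega_n=\Omega$ and $4\kappa_nS_n-Q_n^2\le 0$, then $F_n(t)$ converges to a constant as $t\to\infty$. Consequently the time-varying coefficients $\kappa_n(F_n(t)+F_n^*(t))$, $\kappa_nF_n^*(t)$ and $\kappa_nF_n(t)$ in the evolution equations of $\langle\sigma_n^+\sigma_n^-\rangle$, $\langle\sigma_n^+a\rangle$ and $\langle\sigma_n^-a^\dagger\rangle$ converge to constants, i.e. these trajectories become Markovian as $t\to\infty$.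
   Context: Setting: an $N$-level ladder atom coupled to a cavity mode (annihilation operator $a$) and to a non-Markovian bosonic environment with memory kernel $\alpha(t,s)=\frac{\gamma}{2}e^{-\gamma|t-s|-i\Omega(t-s)}$; $\sigma_n^-=|n-1\rangle\langle n|$, $\sigma_n^+=|n\rangle\langle n-1|$, $\tilde\omega_n$ is the transition frequency between levels $n-1$ and $n$, $\kappa_n$ is the decay rate of level $n$ to the environment and $\chi_n$ a real environmental constant. The non-Markovian decay is encoded by the complex function $F_n(t)$ defined by the Riccati equation above; the interaction is called Markovian when $F_n$ is constant, and the dynamics is said to converge to Markovian when $F_n(t)$ converges to a constant as $t\to\infty$. With $\tilde g_n=g_ne^{i\Delta_nt}$, the mean values satisfy, among others, $\frac{d}{dt}\langle\sigma_n^+ a\rangle=-i\Delta_n\langle\sigma_n^+a\rangle-i\tilde g_n^*\langle\sigma_n^+\sigma_n^-\rangle+i\tilde g_n^*\langle a^\dagger a\rangle-F_n^*(t)\kappa_n\langle\sigma_n^+a\rangle$ (and its conjugate for $\langle\sigma_n^-a^\dagger\rangle$), and the population equation for $\langle\sigma_n^+\sigma_n^-\rangle$ contains the decay term $-(F_n+F_n^* )\kappa_n\langle\sigma_n^+\sigma_n^-\rangle$. *)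

(* Defs.v *)
From Stdlib Require Import Reals.
From Coquelicot Require Import Coquelicot.

Open Scope C_scope.

Definition Qn (gamma Omega omega : R) : C :=
  - (RtoC gamma + Ci * RtoC Omega - Ci * RtoC omega).

Definition Sn (gamma chi : R) : C := RtoC (gamma * chi / 2).

Definition riccati_solution (kappa gamma chi Omega omega : R) (F : R -> C) : Prop :=
  F 0%R = 0 /\
  filterlim F (at_right 0%R) (locally (F 0%R)) /\
  (forall t : R, (0 < t)%R ->
     is_derive F t (RtoC kappa * (F t * F t) + Qn gamma Omega omega * F t + Sn gamma chi)).

Definition converges_at_infty (G : R -> C) : Prop :=
  exists L : C, filterlim G (Rbar_locally p_infty) (locally L).

(* Main.v *)
Require Import Defs.
From Stdlib Require Import Reals Lra Psatz.
From Coquelicot Require Import Coquelicot.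

Open Scope C_scope.

Module Aux.
Local Open Scope R_scope.

Lemma comp_fst (F : R -> C) t (l : C) : is_derive F t l -> is_derive (fun s => fst (F s)) t (fst l).
Proof.
  intros H. unfold is_derive in *.
  exact (filterdiff_comp' F (fun p : prod_NormedModule R_AbsRing R_NormedModule R_NormedModule => fst p) t _ (fun p => fst p) H (filterdiff_linear _ is_linear_fst)).
Qed.

Lemma comp_snd (F : R -> C) t (l : C) : is_derive F t l -> is_derive (fun s => snd (F s)) t (snd l).
Proof.
  intros H. unfold is_derive in *.
  exact (filterdiff_comp' F (fun p : prod_NormedModule R_AbsRing R_NormedModule R_NormedModule => snd p) t _ (fun p => snd p) H (filterdiff_linear _ is_linear_snd)).
Qed.

Lemma rc_fst (F : R -> C) (z : C) : filterlim F (at_right 0) (locally z) -> filterlim (fun s => fst (F s)) (at_right 0) (locally (fst z)).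
Proof.
  intros H. apply (filterlim_comp _ _ _ F fst _ (locally z)); auto.
  intros P [eps He]. exists eps. intros y [Hy _]. apply He, Hy.
Qed.

Lemma rc_snd (F : R -> C) (z : C) : filterlim F (at_right 0) (locally z) -> filterlim (fun s => snd (F s)) (at_right 0) (locally (snd z)).
Proof.
  intros H. apply (filterlim_comp _ _ _ F snd _ (locally z)); auto.
  intros P [eps He]. exists eps. intros y [_ Hy]. apply He, Hy.
Qed.

Lemma dmult (f g : R -> R) x df dg : is_derive f x df -> is_derive g x dg ->
  is_derive (fun t => f t * g t) x (df * g x + f x * dg).
Proof. intros. apply (is_derive_mult f g x df dg); auto. intros; apply Rmult_comm. Qed.

Lemma deq (f : R -> R) (x l l' : R) : is_derive f x l -> l = l' -> is_derive f x l'.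
Proof. intros H ->; exact H. Qed.

Lemma rc_lin (X A B : R -> R) x0 : filterlim X (at_right 0) (locally x0) -> continuous A 0 -> continuous B 0 ->
  filterlim (fun t => A t * X t + B t) (at_right 0) (locally (A 0 * x0 + B 0)).
Proof.
  intros HX HA HB.
  assert (HA' : filterlim A (at_right 0) (locally (A 0))).
  { eapply filterlim_filter_le_1; [|exact HA]. intros P HP. apply filter_le_within. exact HP. }
  assert (HB' : filterlim B (at_right 0) (locally (B 0))).
  { eapply filterlim_filter_le_1; [|exact HB]. intros P HP. apply filter_le_within. exact HP. }
  apply (filterlim_comp_2 (G:=locally (A 0 * x0)) (H:=locally (B 0)) (fun t => A t * X t) B Rplus).
  - apply (filterlim_comp_2 (G:=locally (A 0)) (H:=locally x0) A X Rmult); auto. apply (filterlim_mult (K:=R_AbsRing)).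
  - exact HB'.
  - apply (filterlim_plus (V:=R_NormedModule)).
Qed.

Lemma ball_R (x e y : R) : ball x e y <-> Rabs (y - x) < e.
Proof. unfold ball; simpl; unfold AbsRing_ball, abs, minus, plus, opp; simpl. tauto. Qed.

Lemma uniq (phi a : R -> R) (T M : R) :
  phi 0 = 0 -> filterlim phi (at_right 0) (locally 0) ->
  (forall t, 0 < t <= T -> is_derive phi t (a t * phi t)) ->
  (forall t, 0 < t <= T -> Rabs (a t) <= M) ->
  forall t, 0 <= t <= T -> phi t = 0.
Proof.
  intros H0 Hc Hd Ha t [Ht0 HtT].
  destruct (Req_dec t 0) as [->|Htn]; [exact H0|].
  assert (Htp: 0 < t) by lra.
  assert (HM: 0 <= M) by (specialize (Ha t (conj Htp HtT)); pose proof (Rabs_pos (a t)); lra).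
  set (v := fun s => (phi s * phi s) * exp (-(2*M) * s)).
  assert (Hdv : forall s, 0 < s <= T -> is_derive v s (2 * (a s - M) * (phi s * phi s) * exp (-(2*M)*s))).
  { intros s Hs. unfold v. eapply deq.
    - apply dmult. apply dmult; apply Hd; auto.
      assert (E: is_derive (fun s => exp (-(2*M)*s)) s (-(2*M) * exp (-(2*M)*s))).
      { auto_derive; auto; ring. }
      exact E.
    - simpl. ring. }
  assert (Hv: forall s, 0 < s < t -> v t <= v s).
  { intros s Hs.
    destruct (MVT_gen v s t (fun s => 2 * (a s - M) * (phi s * phi s) * exp (-(2*M)*s))) as [c [Hc1 Hc2]].
    - intros x Hx. rewrite Rmin_left in Hx by lra. rewrite Rmax_right in Hx by lra. apply Hdv. lra.
    - intros x Hx. rewrite Rmin_left in Hx by lra. rewrite Rmax_right in Hx by lra.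
      apply continuity_pt_filterlim. apply (ex_derive_continuous (K:=R_AbsRing) (V:=R_NormedModule)). eexists. apply Hdv. lra.
    - rewrite Rmin_left in Hc1 by lra. rewrite Rmax_right in Hc1 by lra.
      assert (Hac := Ha c ltac:(lra)).
      assert (a c <= M) by (pose proof (Rle_abs (a c)); lra).
      assert (0 <= phi c * phi c) by nra.
      assert (0 < exp (-(2*M)*c)) by apply exp_pos.
      assert (2 * (a c - M) * (phi c * phi c) * exp (-(2*M)*c) <= 0).
      { assert (0 <= (M - a c) * (phi c * phi c)) by nra. nra. }
      nra. }
  assert (Hvt : v t <= 0).
  { destruct (Rle_or_lt (v t) 0) as [H|H]; auto. exfalso.
    set (eps := Rmin 1 (v t)).
    assert (Heps : 0 < eps) by (unfold eps; apply Rmin_glb_lt; lra).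
    destruct (proj1 (filterlim_locally _ _) Hc (mkposreal eps Heps)) as [d Hdd].
    set (s := Rmin (d/2) (t/2)).
    assert (Hs0 : 0 < s) by (unfold s; apply Rmin_glb_lt; pose proof (cond_pos d); lra).
    assert (Hst : s < t) by (unfold s; pose proof (Rmin_r (d/2) (t/2)); lra).
    assert (Hsd : s < d) by (unfold s; pose proof (Rmin_l (d/2) (t/2)); pose proof (cond_pos d); lra).
    assert (Hb : ball 0 d s) by (apply ball_R; rewrite Rminus_0_r, Rabs_pos_eq; lra).
    specialize (Hdd s Hb Hs0). pose proof (proj1 (ball_R _ _ _) Hdd) as Hdd2. rewrite Rminus_0_r in Hdd2.
    specialize (Hv s (conj Hs0 Hst)).
    assert (Hvs : v s < v t).
    { unfold v at 1.
      assert (exp (-(2*M)*s) <= 1).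
      { rewrite <- exp_0. destruct (Req_dec M 0) as [->|].
        - replace (-(2*0)*s) with 0 by ring. lra.
        - left. apply exp_increasing. nra. }
      assert (Habs: Rabs (phi s) < eps) by exact Hdd2.
      assert (eps <= 1) by apply Rmin_l.
      assert (eps <= v t) by apply Rmin_r.
      destruct (Rabs_def2 _ _ Habs) as [Hl Hr].
      assert (phi s * phi s < eps * eps) by nra.
      assert (0 <= phi s * phi s) by nra.
      assert (0 < exp (-(2*M)*s)) by apply exp_pos.
      nra. }
    lra. }
  unfold v in Hvt.
  assert (0 < exp (-(2*M)*t)) by apply exp_pos.
  assert (phi t * phi t <= 0) by nra.
  nra.
Qed.

Lemma bnd (f : R -> R) T : filterlim f (at_right 0) (locally (f 0)) ->
  (forall t, 0 < t -> ex_derive f t) -> exists M, forall t, 0 < t <= T -> Rabs (f t) <= M.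
Proof.
  intros Hc Hd.
  destruct (proj1 (filterlim_locally _ _) Hc (mkposreal 1 Rlt_0_1)) as [d Hdd].
  pose proof (cond_pos d) as Hd0.
  destruct (@bounded_continuity R_AbsRing R_NormedModule f (d/2) (Rmax T (d/2))) as [M1 HM1].
  { intros x Hx. apply ex_derive_continuous. apply Hd. lra. }
  exists (Rmax (Rabs (f 0) + 1) M1). intros t Ht.
  destruct (Rlt_or_le t (d/2)) as [H|H].
  - assert (Hb : ball 0 d t) by (apply ball_R; rewrite Rminus_0_r, Rabs_pos_eq; lra).
    specialize (Hdd t Hb ltac:(lra)). pose proof (proj1 (ball_R _ _ _) Hdd) as Hdd2.
    simpl in Hdd2. pose proof (Rabs_triang_inv (f t) (f 0)). pose proof (Rmax_l (Rabs (f 0) + 1) M1). lra.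
  - assert (Hx : d/2 <= t <= Rmax T (d/2)) by (split; [lra|]; pose proof (Rmax_l T (d/2)); lra).
    specialize (HM1 t Hx). unfold norm in HM1; simpl in HM1. unfold abs in HM1; simpl in HM1.
    pose proof (Rmax_r (Rabs (f 0) + 1) M1). lra.
Qed.

Lemma rc_lin0 (X A B : R -> R) x0 : filterlim X (at_right 0) (locally x0) -> continuous A 0 -> continuous B 0 ->
  A 0 * x0 + B 0 = 0 ->
  filterlim (fun t => A t * X t + B t) (at_right 0) (locally 0).
Proof. intros H1 H2 H3 H4. pose proof (rc_lin X A B x0 H1 H2 H3) as H. rewrite H4 in H. exact H. Qed.

Lemma dlin (X A B : R -> R) t dX dA dB : is_derive X t dX -> is_derive A t dA -> is_derive B t dB ->
  is_derive (fun t => A t * X t + B t) t (dA * X t + A t * dX + dB).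
Proof.
  intros HX HA HB.
  apply (is_derive_plus (V:=R_NormedModule) (fun t => A t * X t) B t (dA * X t + A t * dX) dB); auto.
  apply dmult; auto.
Qed.

Lemma abs_le (x M : R) : Rabs x <= M -> -M <= x <= M.
Proof. unfold Rabs; destruct Rcase_abs; lra. Qed.

Lemma real_conv (X : R -> R) (k xm xp : R) : 0 < k -> xm <= xp -> 0 < xm + xp ->
  X 0 = 0 -> filterlim X (at_right 0) (locally (X 0)) ->
  (forall t, 0 < t -> is_derive X t (k * (X t - xm) * (X t - xp))) ->
  forall eps, 0 < eps -> exists M, forall t, M < t -> Rabs (X t - xm) < eps.
Proof.
  intros Hk Hle Hsum H0 Hc Hd eps Heps.
  assert (Hex : forall t, 0 < t -> ex_derive X t) by (intros t Ht; eexists; apply Hd, Ht).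
  assert (Hbnd : forall T, exists M, forall t, 0 < t <= T -> Rabs (k * (X t - xp)) <= M).
  { intros T. destruct (bnd X T Hc Hex) as [Mx HMx]. exists (k * Mx + k * Rabs xp).
    intros t Ht. specialize (HMx t Ht). apply abs_le in HMx.
    rewrite Rabs_mult, (Rabs_pos_eq k) by lra. rewrite <- Rmult_plus_distr_l.
    apply Rmult_le_compat_l; [lra|].
    unfold Rabs; repeat destruct Rcase_abs; lra. }
  destruct (Rle_lt_or_eq_dec _ _ Hle) as [Hlt|Heq].
  -
    set (c := xm / xp). set (rho := k * (xp - xm)).
    assert (Hxp : 0 < xp) by lra.
    assert (Hrho : 0 < rho) by (unfold rho; nra).
    assert (Hc1 : Rabs c < 1).
    { unfold c. rewrite Rabs_div by lra. rewrite (Rabs_pos_eq xp) by lra.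
      apply (Rmult_lt_reg_r xp); [lra|]. unfold Rdiv. rewrite Rmult_assoc, Rinv_l by lra.
      unfold Rabs; destruct Rcase_abs; lra. }
    set (A := fun t => 1 - c * exp (- rho * t)).
    set (B := fun t => - xm * (1 - c * exp (- rho * t)) + (xp - xm) * c * exp (- rho * t)).
    assert (Hphi : forall t, 0 <= t -> A t * X t + B t = 0).
    { intros t Ht. destruct (Hbnd t) as [M HM].
      apply (uniq (fun t => A t * X t + B t) (fun t => k * (X t - xp)) t M); auto.
      - rewrite H0. unfold A, B. rewrite !Rmult_0_r, exp_0. unfold c. field. lra.
      - apply rc_lin0 with (X 0); auto.
        + apply (ex_derive_continuous (K:=R_AbsRing) (V:=R_NormedModule)). unfold A. auto_derive. auto.
        + apply (ex_derive_continuous (K:=R_AbsRing) (V:=R_NormedModule)). unfold B. auto_derive. auto.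
        + rewrite H0. unfold A, B. rewrite !Rmult_0_r, exp_0. unfold c. field. lra.
      - intros s Hs.
        assert (HA : is_derive A s (c * rho * exp (- rho * s))).
        { unfold A. auto_derive. auto. ring. }
        assert (HB : is_derive B s (- (xm + (xp - xm)) * c * rho * exp (- rho * s))).
        { unfold B. auto_derive. auto. ring. }
        eapply deq. apply dlin. apply Hd. lra. exact HA. exact HB.
        unfold A, B, rho. ring.
      - lra. }
    set (K := (xp - xm) / (1 - Rabs c)).
    assert (HK : K * (1 - Rabs c) = xp - xm) by (unfold K; field; lra).
    assert (HK0 : 0 <= K) by (unfold K; apply Rdiv_le_0_compat; lra).
    exists (K / (rho * eps)). intros t Ht.
    assert (HM0 : 0 <= K / (rho * eps)) by (apply Rdiv_le_0_compat; nra).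
    assert (HMe : K / (rho * eps) * (rho * eps) = K) by (field; lra).
    assert (Ht0 : 0 < t) by lra.
    specialize (Hphi t ltac:(lra)). unfold A, B in Hphi.
    set (e := exp (- rho * t)) in *. set (E := exp (rho * t)).
    assert (HeE : e * E = 1) by (unfold e, E; rewrite <- exp_plus; replace (- rho * t + rho * t) with 0 by ring; apply exp_0).
    assert (HE : 1 + rho * t < E) by (unfold E; apply exp_ineq1; nra).
    assert (He0 : 0 < e) by apply exp_pos.
    assert (Hrt : 0 < rho * t) by (apply Rmult_lt_0_compat; lra).
    assert (He1 : e <= 1) by nra.
    set (u := X t - xm).
    assert (Hu : u * (1 - c * e) = - (xp - xm) * c * e) by (unfold u; lra).
    assert (Hw : 1 - Rabs c <= Rabs (1 - c * e)).
    { assert (Hce : Rabs (c * e) <= Rabs c).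
      { rewrite Rabs_mult, (Rabs_pos_eq e) by lra. pose proof (Rabs_pos c). nra. }
      pose proof (Rabs_triang_inv 1 (c * e)). rewrite Rabs_R1 in H. lra. }
    assert (Huw : Rabs u * Rabs (1 - c * e) <= (xp - xm) * e).
    { rewrite <- Rabs_mult, Hu, !Rabs_mult, Rabs_Ropp, (Rabs_pos_eq (xp - xm)), (Rabs_pos_eq e) by lra.
      assert (0 <= (xp - xm) * e) by nra. nra. }
    assert (Hu1 : Rabs u * (1 - Rabs c) <= (xp - xm) * e).
    { pose proof (Rabs_pos u). nra. }
    assert (Hu2 : Rabs u * E <= K).
    { assert (Rabs u * (1 - Rabs c) * E <= (xp - xm) * e * E).
      { apply Rmult_le_compat_r; lra. }
      replace ((xp - xm) * e * E) with (xp - xm) in H by (rewrite Rmult_assoc, HeE; ring).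
      rewrite <- HK in H.
      assert (0 < 1 - Rabs c) by lra.
      assert ((Rabs u * E - K) * (1 - Rabs c) <= 0) by nra. nra. }
    assert (HKE : K < eps * E).
    { assert (K <= t * (rho * eps)).
      { rewrite <- HMe. apply Rmult_le_compat_r; nra. }
      nra. }
    fold u. nra.
  - subst xp.
    assert (Hxm : 0 < xm) by lra.
    set (A := fun t => 1 + k * xm * t).
    set (B := fun t => - xm * (1 + k * xm * t) + xm).
    assert (Hphi : forall t, 0 <= t -> A t * X t + B t = 0).
    { intros t Ht. destruct (Hbnd t) as [M HM].
      apply (uniq (fun t => A t * X t + B t) (fun t => k * (X t - xm)) t M); auto.
      - rewrite H0. unfold A, B. ring.
      - apply rc_lin0 with (X 0); auto.
        + apply (ex_derive_continuous (K:=R_AbsRing) (V:=R_NormedModule)). unfold A. auto_derive. auto.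
        + apply (ex_derive_continuous (K:=R_AbsRing) (V:=R_NormedModule)). unfold B. auto_derive. auto.
        + rewrite H0. unfold A, B. ring.
      - intros s Hs.
        assert (HA : is_derive A s (k * xm)).
        { unfold A. auto_derive. auto. ring. }
        assert (HB : is_derive B s (- xm * (k * xm))).
        { unfold B. auto_derive. auto. ring. }
        eapply deq. apply dlin. apply Hd. lra. exact HA. exact HB.
        unfold A, B. ring.
      - lra. }
    exists (/ (k * eps)). intros t Ht.
    assert (Hke : 0 < k * eps) by nra.
    assert (Hinv : 0 < / (k * eps)) by (apply Rinv_0_lt_compat; lra).
    assert (H1 : 1 < k * eps * t).
    { replace 1 with (/ (k * eps) * (k * eps)) by (field; lra). nra. }
    specialize (Hphi t ltac:(lra)). unfold A, B in Hphi.
    set (u := X t - xm).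
    assert (Hu : u * (1 + k * xm * t) = - xm) by (unfold u; lra).
    assert (Hpos : 0 < 1 + k * xm * t) by nra.
    assert (Hau : Rabs u * (1 + k * xm * t) = xm).
    { rewrite <- (Rabs_pos_eq (1 + k * xm * t)) by lra. rewrite <- Rabs_mult, Hu, Rabs_Ropp. apply Rabs_pos_eq; lra. }
    assert (xm < eps * (1 + k * xm * t)) by nra.
    fold u. nra.
Qed.

End Aux.
Import Aux.

Lemma conv_C (G : R -> C) (X : R -> R) (alpha xm : R) :
  (forall t, (0 < t)%R -> fst (G t) = (alpha * X t)%R /\ snd (G t) = 0%R) ->
  (forall eps, (0 < eps)%R -> exists M, forall t, (M < t)%R -> (Rabs (X t - xm) < eps)%R) ->
  converges_at_infty G.
Proof.
  intros H1 H2. exists (alpha * xm, 0)%R. apply filterlim_locally. intros eps.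
  pose proof (cond_pos eps) as He.
  assert (Ha : (0 < Rabs alpha + 1)%R) by (pose proof (Rabs_pos alpha); lra).
  destruct (H2 (eps / (Rabs alpha + 1))%R) as [M HM].
  { apply Rdiv_lt_0_compat; lra. }
  exists (Rmax M 0). intros t Ht.
  assert (Ht0 : (0 < t)%R) by (pose proof (Rmax_r M 0); lra).
  assert (HtM : (M < t)%R) by (pose proof (Rmax_l M 0); lra).
  destruct (H1 t Ht0) as [E1 E2].
  unfold ball; simpl; unfold prod_ball. split.
  - apply ball_R. change (Rabs (@fst R R (G t) - alpha * xm) < eps)%R. rewrite E1. replace (alpha * X t - alpha * xm)%R with (alpha * (X t - xm))%R by ring.
    rewrite Rabs_mult. specialize (HM t HtM).
    assert (Hx : (Rabs alpha * Rabs (X t - xm) <= Rabs alpha * (eps / (Rabs alpha + 1)))%R).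
    { apply Rmult_le_compat_l; [apply Rabs_pos|lra]. }
    assert (Rabs alpha * (eps / (Rabs alpha + 1)) < eps)%R.
    { apply (Rmult_lt_reg_r (Rabs alpha + 1)); [lra|]. unfold Rdiv.
      replace (Rabs alpha * (eps * / (Rabs alpha + 1)) * (Rabs alpha + 1))%R with (Rabs alpha * eps)%R by (field; lra). lra. }
    lra.
  - apply ball_R. change (Rabs (@snd R R (G t) - 0) < eps)%R. rewrite E2. rewrite Rminus_0_r, Rabs_R0. exact He.
Qed.

Theorem theorem1 (kappa gamma chi Omega omega : R) (F : R -> C) :
  (0 < kappa)%R -> (0 < gamma)%R ->
  riccati_solution kappa gamma chi Omega omega F ->
  omega = Omega ->
  (Re (4 * RtoC kappa * Sn gamma chi - Qn gamma Omega omega * Qn gamma Omega omega) <= 0)%R /\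
  Im (4 * RtoC kappa * Sn gamma chi - Qn gamma Omega omega * Qn gamma Omega omega) = 0%R ->
  converges_at_infty F /\
  converges_at_infty (fun t => RtoC kappa * (F t + Cconj (F t))) /\
  converges_at_infty (fun t => RtoC kappa * Cconj (F t)) /\
  converges_at_infty (fun t => RtoC kappa * F t).
Proof.
  intros Hk Hg [HF0 [HFc HFd]] Homega [HRe HIm]. subst omega.
  unfold Re, Qn, Sn in HRe. simpl in HRe.
  set (s := (gamma * chi / 2)%R) in *.
  set (X := fun t => fst (F t)). set (Y := fun t => snd (F t)).
  assert (HdX : forall t, (0 < t)%R -> is_derive X t (kappa * (X t * X t - Y t * Y t) - gamma * X t + s)%R).
  { intros t Ht. eapply deq. apply comp_fst, HFd, Ht. unfold X, Y, Qn, Sn, s. simpl. ring. }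
  assert (HdY : forall t, (0 < t)%R -> is_derive Y t ((2 * kappa * X t - gamma) * Y t)%R).
  { intros t Ht. eapply deq. apply comp_snd, HFd, Ht. unfold X, Y, Qn, Sn, s. simpl. ring. }
  assert (HD : (0 <= gamma * gamma - 4 * kappa * s)%R).
  { replace (gamma * gamma - 4 * kappa * s)%R with (- ((4 * kappa - 0 * 0) * s - (4 * 0 + 0 * kappa) * 0 +
    -
    (- (gamma + (0 * Omega - 1 * 0) + - (0 * Omega - 1 * 0)) *
     - (gamma + (0 * Omega - 1 * 0) + - (0 * Omega - 1 * 0)) -
     - (0 + (0 * 0 + 1 * Omega) + - (0 * 0 + 1 * Omega)) *
     - (0 + (0 * 0 + 1 * Omega) + - (0 * 0 + 1 * Omega)))))%R by ring. lra. }
  assert (HX0 : X 0%R = 0%R) by (unfold X; rewrite HF0; reflexivity).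
  assert (HY0 : Y 0%R = 0%R) by (unfold Y; rewrite HF0; reflexivity).
  assert (HXc : filterlim X (at_right 0) (locally (X 0%R))) by exact (rc_fst F (F 0%R) HFc).
  assert (HYc : filterlim Y (at_right 0) (locally 0%R)).
  { pose proof (rc_snd F (F 0%R) HFc) as H. rewrite HF0 in H. exact H. }
  assert (HY : forall t, (0 <= t)%R -> Y t = 0%R).
  { intros t Ht.
    destruct (bnd X t HXc (fun u Hu => ex_intro _ _ (HdX u Hu))) as [Mx HMx].
    apply (uniq Y (fun u => 2 * kappa * X u - gamma)%R t (2 * kappa * Mx + gamma)%R); auto.
    - intros u Hu. apply HdY. lra.
    - intros u Hu. specialize (HMx u Hu). apply abs_le in HMx.
      unfold Rabs; destruct Rcase_abs; nra.
    - lra. }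
  set (r := sqrt (gamma * gamma - 4 * kappa * s)).
  assert (Hrr : (r * r = gamma * gamma - 4 * kappa * s)%R) by (apply sqrt_sqrt; lra).
  assert (Hr0 : (0 <= r)%R) by apply sqrt_pos.
  set (xm := ((gamma - r) / (2 * kappa))%R). set (xp := ((gamma + r) / (2 * kappa))%R).
  assert (HdX' : forall t, (0 < t)%R -> is_derive X t (kappa * (X t - xm) * (X t - xp))%R).
  { intros t Ht. eapply deq. apply HdX, Ht. rewrite (HY t) by lra.
    replace (kappa * (X t - xm) * (X t - xp))%R with (kappa * X t * X t - gamma * X t + (gamma * gamma - r * r) / (4 * kappa))%R
      by (unfold xm, xp; field; lra).
    rewrite Hrr. field. lra. }
  assert (Hle : (xm <= xp)%R).
  { unfold xm, xp, Rdiv. apply Rmult_le_compat_r. left. apply Rinv_0_lt_compat. lra. lra. }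
  assert (Hsum : (0 < xm + xp)%R).
  { replace (xm + xp)%R with (gamma / kappa)%R by (unfold xm, xp; field; lra). apply Rdiv_lt_0_compat; lra. }
  pose proof (real_conv X kappa xm xp Hk Hle Hsum HX0 HXc HdX') as Hconv.
  assert (HYt : forall t, (0 < t)%R -> snd (F t) = 0%R) by (intros t Ht; apply (HY t); lra).
  split; [|split; [|split]].
  - apply (conv_C _ X 1 xm); auto. intros t Ht. unfold X. split; [ring|]. apply HYt, Ht.
  - apply (conv_C _ X (2 * kappa) xm); auto. intros t Ht. unfold X. simpl. rewrite (HYt t Ht). split; ring.
  - apply (conv_C _ X kappa xm); auto. intros t Ht. unfold X. simpl. rewrite (HYt t Ht). split; ring.
  - apply (conv_C _ X kappa xm); auto. intros t Ht. unfold X. simpl. rewrite (HYt t Ht). split; ring.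
Qed.
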